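(* There exist real numbers $F_0,F_1,\dots,F_{2n}$ such that for every density operator $\rho$ on $\mathcal{H}_n\otimes\mathcal{H}_n$ whose range is contained in $\mathcal{K}$ (in particular $\mathrm{Tr}\rho=1$), $$\sum_{a\in\{0,1\}^{2n},\,|a|=k}\rho_{aa}=F_k\qquad k=0,1,\dots,2n.$$
   Context: $\mathcal{H}_n$ is the Fock space of $n$ fermionic modes with Majorana operators $c_1,\dots,c_{2n}$ ($c_{2j-1}=a_j+a_j^\dagger$, $c_{2j}=-i(a_j-a_j^\dagger)$). For $x\in\{0,1\}^{2n}$ let $c(x)=c_1^{x_1}\cdots c_{2n}^{x_{2n}}$ and $|x|$ its Hamming weight. Every operator $\rho$ on $\mathcal{H}_n\otimes\mathcal{H}_n$ (ordinary tensor product) expands uniquely as $\rho=\sum_{a,b\in\{0,1\}^{2n}}\rho_{ab}\,c(a)\otimes c(b)$ with $\rho_{ab}=2^{-2n}\mathrm{Tr}(\rho\,c(a)\otimes c(b))$. Let $\Lambda=\sum_{p=1}^{2n}c_p\otimes c_p$ and $\mathcal{K}=\ker\Lambda$. *)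

(* Defs.v *)
(* Complex scalars: an arbitrary numClosedFieldType C
   (e.g. algC, or complex R over a real closed field). *)
From HB Require Import structures.
From mathcomp Require Import all_boot all_order all_algebra.
From mathcomp Require Export mxtens.
Set Implicit Arguments. Unset Strict Implicit. Unset Printing Implicit Defensive.
Import Order.TTheory GRing.Theory Num.Theory.
Local Open Scope ring_scope.

(* Fock space H_n of n fermionic modes: C^(2^n), basis vector |x> for
   x < 2^n, the occupation of mode j (0-indexed) being bit j of x. *)
Definition occ (x j : nat) : bool := odd (x %/ 2 ^ j).

Definition adjmx (C : numClosedFieldType) m n (A : 'M[C]_(m, n)) : 'M[C]_(n, m) :=
  \matrix_(i, j) (A j i)^*.

(* Annihilation operator a_j (mode j, 0-indexed), Jordan-Wigner form:
   a_j |x> = (-1)^(sum_{k<j} x_k) |x - e_j> if x_j = 1, and 0 otherwise. *)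
Definition ann (C : numClosedFieldType) (n j : nat) : 'M[C]_(2 ^ n) :=
  \matrix_(y, x)
    (if occ x j && (y == (x - 2 ^ j)%N :> nat)
     then (-1) ^+ (\sum_(k < j) occ x k)%N else 0).

(* Majorana operators, 0-indexed: for p = 2j (i.e. c_{2j+1} 1-indexed)
   c = a_j + a_j^dag ; for p = 2j+1 (c_{2j+2}) c = -i (a_j - a_j^dag). *)
Definition majorana (C : numClosedFieldType) (n : nat) (p : 'I_(2 * n)) : 'M[C]_(2 ^ n) :=
  let a := @ann C n p./2 in
  if ~~ odd p then a + adjmx a else - 'i *: (a - adjmx a).

Definition cmono (C : numClosedFieldType) (n : nat) (x : {ffun 'I_(2 * n) -> bool})
  : 'M[C]_(2 ^ n) :=
  \prod_(p < 2 * n) (if x p then @majorana C n p else 1).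

Definition hweight n (x : {ffun 'I_(2 * n) -> bool}) : nat := #|[pred p | x p]|.

Definition rho_coef (C : numClosedFieldType) (n : nat) (rho : 'M[C]_(2 ^ n * 2 ^ n))
  (a b : {ffun 'I_(2 * n) -> bool}) : C :=
  (2 ^+ (2 * n))^-1 * \tr (rho *m (@cmono C n a *t @cmono C n b)).

Definition Lambda (C : numClosedFieldType) (n : nat) : 'M[C]_(2 ^ n * 2 ^ n) :=
  \sum_(p < 2 * n) (@majorana C n p *t @majorana C n p).

Definition density (C : numClosedFieldType) N (rho : 'M[C]_N) : Prop :=
  [/\ adjmx rho = rho,
      forall v : 'cV[C]_N, 0 <= (adjmx v *m rho *m v) ord0 ord0
    & \tr rho = 1].

(* range(rho) is contained in K = ker Lambda. *)
Definition range_in_kerLambda (C : numClosedFieldType) (n : nat)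
  (rho : 'M[C]_(2 ^ n * 2 ^ n)) : Prop :=
  forall v : 'cV[C]_(2 ^ n * 2 ^ n), @Lambda C n *m (rho *m v) = 0.

(* Main.v *)
Require Import Defs.
From HB Require Import structures.
From mathcomp Require Import all_boot all_order all_algebra.
From mathcomp Require Import zify ring.
Import Order.TTheory GRing.Theory Num.Theory.

Local Open Scope ring_scope.
Local Close Scope ring_scope.

Lemma occ_add_same x j : occ (x + 2 ^ j) j = ~~ occ x j.
Proof.
rewrite /occ divnDr ?dvdnn // divnn expn_gt0 /=.
by rewrite addn1 /=.
Qed.

Lemma occ_add_other x i j : i != j -> ~~ occ x j -> occ (x + 2 ^ j) i = occ x i.
Proof.
rewrite /occ => ij hx.
case: (ltngtP i j) => [lt|gt|eq]; last by rewrite eq eqxx in ij.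
- have -> : 2 ^ j = 2 ^ (j - i) * 2 ^ i by rewrite -expnD subnK // ltnW.
  rewrite divnDMl ?expn_gt0 // oddD oddX. rewrite subn_eq0 leqNgt lt /= addbF. done.
- have E : 2 ^ i = 2 ^ j * 2 ^ (i - j) by rewrite -expnD subnKC // ltnW.
  rewrite E !divnMA.
  have -> : x + 2 ^ j = x + 1 * 2 ^ j by rewrite mul1n.
  rewrite divnDMl ?expn_gt0 //.
  move: hx; set u := x %/ 2 ^ j => hu.
  have -> : 2 ^ (i - j) = 2 * 2 ^ (i - j).-1 by rewrite -expnS prednK // subn_gt0.
  rewrite !divnMA; congr (odd (_ %/ _)).
  have : u = u./2.*2 by rewrite -[LHS]odd_double_half (negbTE hu).
  move=> ->. rewrite -!muln2 divnMDl // divn_small // mulnK // addn0. done.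
Qed.

Lemma occ_ge x j : occ x j -> 2 ^ j <= x.
Proof.
rewrite /occ => h; case: (leqP (2 ^ j) x) => // lt.
by rewrite divn_small in h.
Qed.

Lemma occ_add_bound n x j : j < n -> x < 2 ^ n -> ~~ occ x j -> x + 2 ^ j < 2 ^ n.
Proof.
rewrite /occ => jn xn hx.
have E : 2 ^ n = 2 ^ (n - j) * 2 ^ j by rewrite -expnD subnK // ltnW.
have u_lt : x %/ 2 ^ j < 2 ^ (n - j) by rewrite ltn_divLR ?expn_gt0 // -E.
have ev : ~~ odd (2 ^ (n - j)) by rewrite oddX subn_eq0 leqNgt jn.
have u1 : (x %/ 2 ^ j).+1 < 2 ^ (n - j).
  rewrite ltn_neqAle u_lt andbT; apply/eqP => h.
  by move: ev; rewrite -h /= hx.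
have := divn_eq x (2 ^ j); have := ltn_pmod x (expn_gt0 2 j).
rewrite E; move: u1; set u := x %/ 2 ^ j; set r := x %% 2 ^ j; set P := 2 ^ j.
move=> u1 rP ->. nia.
Qed.

Local Open Scope ring_scope.
Local Close Scope ring_scope.

Arguments occ_ge {x j}.
Definition Sb j x := (\sum_(k < j) occ x k)%N.

Lemma occ_sub_same x j : occ x j -> ~~ occ (x - 2 ^ j) j.
Proof. by move=> h; rewrite -occ_add_same subnK ?occ_ge. Qed.

Lemma occ_sub_other x i j : i != j -> occ x j -> occ (x - 2 ^ j) i = occ x i.
Proof.
move=> ij h; rewrite -[in RHS](subnK (occ_ge h)) occ_add_other //.
exact: occ_sub_same.
Qed.

Lemma S_add_ge x j m : ~~ occ x m -> j <= m -> Sb j (x + 2 ^ m) = Sb j x.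
Proof.
move=> hx jm; apply: eq_bigr => k _; rewrite occ_add_other //.
by rewrite neq_ltn (leq_trans (ltn_ord k) jm).
Qed.

Lemma S_add_lt x j m : ~~ occ x m -> m < j -> Sb j (x + 2 ^ m) = (Sb j x).+1.
Proof.
move=> hx mj; rewrite /Sb.
rewrite (eq_bigr (fun k : 'I_j => (occ x k + (k == Ordinal mj))%N)); last first.
  move=> k _; case: eqP => [-> | ne] /=.
    by rewrite occ_add_same (negbTE hx).
  rewrite occ_add_other ?addn0 //; apply/eqP => e; apply: ne; exact: val_inj.
rewrite big_split /=; rewrite -addn1; congr (_ + _)%N; last by rewrite (bigD1 (Ordinal mj)) //= eqxx big1 // => k /negbTE ->.
Qed.

Lemma S_sub_ge x j m : occ x m -> j <= m -> Sb j (x - 2 ^ m) = Sb j x.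
Proof.
move=> hx jm; rewrite -[in RHS](subnK (occ_ge hx)) S_add_ge //.
exact: occ_sub_same.
Qed.

Lemma S_sub_lt x j m : occ x m -> m < j -> Sb j x = (Sb j (x - 2 ^ m)).+1.
Proof.
move=> hx jm; rewrite -[in LHS](subnK (occ_ge hx)) S_add_lt //.
exact: occ_sub_same.
Qed.

Lemma occ_adj x y j :
  (occ y j && (x == y - 2 ^ j)) = (~~ occ x j && (y == x + 2 ^ j)).
Proof.
apply/andP/andP => [[hy /eqP ->]|[hx /eqP ->]].
  by rewrite occ_sub_same // subnK ?occ_ge.
by rewrite occ_add_same hx addnK.
Qed.

Local Open Scope ring_scope.
Local Close Scope ring_scope.
Local Open Scope ring_scope.


Section M.
Variable C : numClosedFieldType.

Definition Mx {N} (P : nat -> bool) (h : nat -> nat) (s : nat -> C) : 'M[C]_N :=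
  \matrix_(y, x) if P x && (y == h x :> nat) then s x else 0.

Lemma Mx_mul N (P1 P2 : nat -> bool) (h1 h2 : nat -> nat) (s1 s2 : nat -> C) (y x : 'I_N) :
  (forall x : 'I_N, P2 x -> (h2 x < N)%N) ->
  (Mx P1 h1 s1 *m Mx P2 h2 s2) y x =
  if P2 x && P1 (h2 x) && (y == h1 (h2 x) :> nat) then s1 (h2 x) * s2 x else 0.
Proof.
move=> hb; rewrite mxE.
case P2x: (P2 x) => /=; last by rewrite big1 // => z _; rewrite !mxE P2x mulr0.
rewrite (bigD1 (Ordinal (hb x P2x))) //= big1 ?addr0.
  rewrite !mxE /= eqxx P2x /=.
  by case: (P1 _ && _); rewrite ?mul0r.
move=> z nz; rewrite !mxE P2x /=.
case: (@eqP _ (nat_of_ord z) (h2 x)) => [ez|_]; last by rewrite mulr0.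
by case/eqP: nz; apply: val_inj.
Qed.

Definition sgn j x : C := (-1) ^+ Sb j x.

Lemma ann_Mx n j : ann C n j = Mx (fun x => occ x j) (fun x => x - 2 ^ j)%N (sgn j).
Proof. by apply/matrixP => y x; rewrite !mxE. Qed.

Lemma adj_ann_Mx n j :
  adjmx (ann C n j) = Mx (fun x => ~~ occ x j) (fun x => x + 2 ^ j)%N (sgn j).
Proof.
apply/matrixP => y x; rewrite !mxE occ_adj.
case: andP => [[hx /eqP ->]|]; last by rewrite conjC0.
have := S_add_ge _ j _ hx (leqnn j); rewrite /Sb => ->; by rewrite rmorph_sign.
Qed.
End M.

Local Open Scope ring_scope.
Local Close Scope ring_scope.
Local Open Scope ring_scope.


Arguments occ_sub_same {x j}.
Section CAR.
Variable C : numClosedFieldType.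
Variable n : nat.
Local Notation N := (2 ^ n)%N.
Local Notation a j := (ann C n j).
Local Notation b j := (adjmx (ann C n j)).

Lemma bnd_sub j : forall x : 'I_N, occ x j -> (x - 2 ^ j < N)%N.
Proof. by move=> x _; apply: leq_ltn_trans (leq_subr _ _) (ltn_ord x). Qed.

Lemma bnd_add j : (j < n)%N -> forall x : 'I_N, ~~ occ x j -> (x + 2 ^ j < N)%N.
Proof. by move=> jn x hx; apply: occ_add_bound. Qed.

Lemma sgn_sq j x : sgn C j x * sgn C j x = 1.
Proof. by rewrite /sgn -expr2 -exprM mulnC exprM sqrrN expr1n expr1n. Qed.

Lemma occ_sub_and x j k : j != k -> occ x k && occ (x - 2 ^ k) j = occ x k && occ x j.
Proof. by move=> jk; case hk: (occ x k) => //=; rewrite occ_sub_other. Qed.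

Lemma CAR_aa j k : a j *m a k + a k *m a j = 0.
Proof.
wlog kj : j k / (k <= j)%N.
  move=> W; case: (leqP k j) => h; first exact: W.
  by rewrite addrC W // ltnW.
apply/matrixP => y x; rewrite !ann_Mx [LHS]mxE !Mx_mul; try exact: bnd_sub; rewrite mxE.
case: (ltngtP k j) kj => // [kj _|-> _]; last first.
  case hj: (occ x j) => /=; last by rewrite addr0. rewrite (negbTE (occ_sub_same hj)) /=.
  by rewrite addr0.
have jk : j != k by rewrite gtn_eqF.
have kj2 : k != j by rewrite ltn_eqF.
rewrite !occ_sub_and // [occ x j && occ x k]andbC subnAC.
case: ifP => [/andP[/andP[hk hj] _]|_]; last by rewrite addr0.
rewrite /sgn (S_sub_lt _ j k hk kj) (S_sub_ge _ k j hj (ltnW kj)) exprS.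
ring.
Qed.

Lemma occ_add_and x j k : j != k ->
  ~~ occ x k && occ (x + 2 ^ k) j = ~~ occ x k && occ x j.
Proof. by move=> jk; case hk: (occ x k) => //=; rewrite occ_add_other ?hk. Qed.

Lemma occ_sub_andN x j k : k != j ->
  occ x j && ~~ occ (x - 2 ^ j) k = occ x j && ~~ occ x k.
Proof. by move=> kj; case hj: (occ x j) => //=; rewrite occ_sub_other. Qed.

Lemma CAR_ab j k : (j < n)%N -> (k < n)%N ->
  a j *m b k + b k *m a j = if j == k then 1%:M else 0.
Proof.
move=> jn kn.
apply/matrixP => y x; rewrite !ann_Mx adj_ann_Mx [LHS]mxE !Mx_mul;
  try (exact: bnd_sub || exact: bnd_add).
have [<-|jk] := eqVneq j k.
  rewrite mxE occ_add_same addnK.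
  case hj: (occ x j) => /=.
    rewrite (occ_sub_same hj) subnK ?(occ_ge hj) //= add0r.
    rewrite val_eqE; case: (y == x) => //; rewrite /sgn (S_sub_ge _ j j hj) //.
    by have := sgn_sq j x; rewrite /sgn => ->.
  rewrite addr0 val_eqE; case: (y == x) => //.
  rewrite /sgn (S_add_ge _ j j) ?hj //.
  by have := sgn_sq j x; rewrite /sgn => ->.
have kj : k != j by rewrite eq_sym.
rewrite mxE occ_add_and // occ_sub_andN //.
case hk: (occ x k); case hj: (occ x j) => /=; rewrite ?addr0 //.
move/negbT: hk => hk.
rewrite -addnBAC ?(occ_ge hj) //.
case: eqP => _; last by rewrite addr0.
case: (ltngtP k j) => [kj'|jk'|e]; last by rewrite e eqxx in kj.
  rewrite /sgn (S_add_lt _ j k hk kj') (S_sub_ge _ k j hj (ltnW kj')) exprS.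
  ring.
rewrite /sgn (S_add_ge _ j k hk (ltnW jk')) (S_sub_lt _ k j hj jk') exprS.
ring.
Qed.

End CAR.

Local Open Scope ring_scope.
Local Close Scope ring_scope.
Local Open Scope ring_scope.


Lemma acm_lin (R : comPzRingType) N (x y x' y' : 'M[R]_N) (al be al' be' : R) :
 (al *: x + be *: y) *m (al' *: x' + be' *: y') + (al' *: x' + be' *: y') *m (al *: x + be *: y) =
 (al*al') *: (x*m x' + x'*m x) + (al*be') *: (x*m y' + y'*m x) + (be*al') *: (y*m x' + x'*m y) + (be*be') *: (y*m y' + y'*m y).
Proof.
rewrite !mulmxDl !mulmxDr -!scalemxAl -!scalemxAr !scalerA !scalerDr.
rewrite [al' * al]mulrC [be' * al]mulrC [al' * be]mulrC [be' * be]mulrC.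
by rewrite !addrA (ACl (1*5*2*7*3*6*4*8)).

Qed.

Lemma adjmx_mul (C : numClosedFieldType) m k l (A : 'M[C]_(m, k)) (B : 'M[C]_(k, l)) :
  adjmx (A *m B) = adjmx B *m adjmx A.
Proof.
apply/matrixP => i j; rewrite !mxE rmorph_sum; apply: eq_bigr => r _.
by rewrite !mxE rmorphM mulrC.
Qed.

Lemma adjmx_add (C : numClosedFieldType) m k (A B : 'M[C]_(m, k)) :
  adjmx (A + B) = adjmx A + adjmx B.
Proof. by apply/matrixP => i j; rewrite !mxE rmorphD. Qed.

Lemma adjmx0 (C : numClosedFieldType) m k : adjmx (0 : 'M[C]_(m, k)) = 0.
Proof. by apply/matrixP => i j; rewrite !mxE rmorph0. Qed.

Section Maj.
Variable C : numClosedFieldType.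
Variable n : nat.
Local Notation N := (2 ^ n)%N.
Local Notation a j := (ann C n j).
Local Notation b j := (adjmx (ann C n j)).

Lemma CAR_bb j k : b j *m b k + b k *m b j = 0.
Proof. by rewrite -!adjmx_mul -adjmx_add addrC CAR_aa adjmx0. Qed.

Definition alp (p : nat) : C := if odd p then - 'i else 1.
Definition bet (p : nat) : C := if odd p then 'i else 1.

Lemma maj_lin (p : 'I_(2 * n)) :
  majorana C p = alp p *: a p./2 + bet p *: b p./2.
Proof.
rewrite /majorana /alp /bet; case: (odd p) => /=; last by rewrite !scale1r.
by rewrite scalerBr scaleNr scaleNr opprK.
Qed.

Lemma half_lt (p : 'I_(2 * n)) : (p./2 < n)%N.
Proof. have := ltn_ord p; lia. Qed.

Lemma maj_acm (p q : 'I_(2 * n)) :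
  majorana C p *m majorana C q + majorana C q *m majorana C p =
  if p == q then 2%:R *: (1 : 'M[C]_N) else 0.
Proof.
rewrite !maj_lin acm_lin.
rewrite CAR_aa CAR_bb !scaler0 add0r addr0.
rewrite [b _ *m a _ + _]addrC.
rewrite (CAR_ab _ _ _ _ (half_lt p) (half_lt q)) (CAR_ab _ _ _ _ (half_lt q) (half_lt p)).
rewrite [q./2 == _]eq_sym.
have hi : 'i * 'i = -1 :> C by rewrite -expr2 sqrCi.
have [<-|pq] := eqVneq p q.
  rewrite eqxx -scalerDl /alp /bet.
  by case: (odd p); congr (_ *: _); rewrite ?mulNr ?mulrN ?hi ?opprK ?mulr1.
case: ifP => [/eqP e|_]; last by rewrite !scaler0 addr0.
have o : odd p != odd q.
  apply: contra pq => /eqP o; apply/eqP/val_inj.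
  by rewrite -[val p]odd_double_half -[val q]odd_double_half o e.
rewrite -scalerDl /alp /bet.
case: (odd p) (odd q) o => [] [] //= _; rewrite ?mulNr ?mulrN ?mulr1 ?mul1r ?addNr ?subrr ?scale0r //.
Qed.
End Maj.

Local Open Scope ring_scope.
Local Close Scope ring_scope.
Local Open Scope ring_scope.


Lemma tens11 (R : comPzRingType) m k :
  (1%:M : 'M[R]_m) *t (1%:M : 'M[R]_k) = 1%:M.
Proof.
apply/matrixP => i j.
case: (mxtens_indexP i) => i0 i1; case: (mxtens_indexP j) => j0 j1.
rewrite tensmxE !mxE (inj_eq (can_inj (@mxtens_indexK _ _))) xpair_eqE.
by case: (i0 == j0); case: (i1 == j1); rewrite /= ?mulr1 ?mulr0 ?mul0r.
Qed.

Lemma tensNN (R : comPzRingType) m k l r (A : 'M[R]_(m, k)) (B : 'M[R]_(l, r)) :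
  (- A) *t (- B) = A *t B.
Proof. by apply/matrixP => i j; rewrite !mxE mulrNN. Qed.

Lemma tens_prod (R : comPzRingType) N (I : Type) (r : seq I) (F : I -> 'M[R]_N) :
  (\prod_(i <- r) F i) *t (\prod_(i <- r) F i) = \prod_(i <- r) (F i *t F i).
Proof.
elim: r => [|x r IH]; first by rewrite !big_nil; exact: tens11.
rewrite !big_cons -IH; exact: (esym (tensmx_mul _ _ _ _)).
Qed.

Lemma mul_prod_upd (R : pzRingType) (I : eqType) (r : seq I) (F G : I -> R) A p :
  uniq r -> p \in r -> (forall q, A * F q = F q * A) -> A * F p = G p ->
  (forall q, q != p -> G q = F q) -> A * \prod_(q <- r) F q = \prod_(q <- r) G q.
Proof.
move=> + + cF hp hG; elim: r => [//|x r IH] /= /andP[xr ur].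
rewrite !big_cons inE; case: (eqVneq p x) => [e _|px /= pr].
  subst p; rewrite mulrA hp; congr (_ * _); apply: eq_big_seq => q qr.
  rewrite hG //; apply/eqP => e; move: xr; by rewrite -e qr.
by rewrite mulrA cF -mulrA IH // hG // eq_sym.
Qed.

Section X.
Variable C : numClosedFieldType.
Variable n : nat.
Local Notation N := (2 ^ n)%N.
Local Notation M p := (majorana C p).

Lemma maj_sq (p : 'I_(2 * n)) : M p *m M p = 1%:M.
Proof.
have := maj_acm C n p p; rewrite eqxx -mulr2n -scaler_nat => /(congr1 (fun X => (2%:R : C)^-1 *: X)).
by rewrite !scalerA mulVf ?pnatr_eq0 // !scale1r.
Qed.

Lemma maj_anti (p q : 'I_(2 * n)) : p != q -> M p *m M q = - (M q *m M p).
Proof. by move=> pq; have := maj_acm C n p q; rewrite (negbTE pq) => /eqP; rewrite addr_eq0 => /eqP. Qed.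

Definition X (p : 'I_(2 * n)) : 'M[C]_(N * N) := M p *t M p.

Lemma X_sq p : X p * X p = 1.
Proof. rewrite /X; change ((M p *t M p) *m (M p *t M p) = 1%:M). by rewrite tensmx_mul maj_sq tens11. Qed.

Lemma X_comm p q : X p * X q = X q * X p.
Proof.
rewrite /X; change ((M p *t M p) *m (M q *t M q) = (M q *t M q) *m (M p *t M p)).
have [->//|pq] := eqVneq p q.
by rewrite !tensmx_mul maj_anti // tensNN.
Qed.
End X.

Local Open Scope ring_scope.
Local Close Scope ring_scope.
Local Open Scope ring_scope.


Section E.
Variable C : numClosedFieldType.
Variable n : nat.
Local Notation N := (2 ^ n)%N.
Local Notation XX := (X C n).
Local Notation bv := {ffun 'I_(2 * n) -> bool}.

Definition fa (a : bv) q := if a q then XX q else 1.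
Definition T (a : bv) : 'M[C]_(N * N) := cmono C a *t cmono C a.

Lemma T_prod a : T a = \prod_(q < 2 * n) fa a q.
Proof.
rewrite /T /cmono tens_prod; apply: eq_bigr => q _; rewrite /fa.
by case: (a q) => //; exact: tens11.
Qed.

Definition flip (a : bv) p : bv := [ffun q => if q == p then ~~ a q else a q].

Lemma flipK p : involutive (flip^~ p).
Proof. by move=> a; apply/ffunP => q; rewrite !ffunE; case: eqP => // _; rewrite negbK. Qed.

Lemma X_T p a : XX p * T a = T (flip a p).
Proof.
rewrite !T_prod.
have h := @mul_prod_upd ('M[C]_(N*N)) _ (index_enum 'I_(2*n)) (fa a) (fa (flip a p)) (XX p) p.
rewrite h //.
- exact: index_enum_uniq.
- by move=> q; rewrite /fa; case: (a q); rewrite ?mulr1 ?mul1r //; apply: X_comm.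
- by rewrite /fa ffunE eqxx; case: (a p) => /=; rewrite ?X_sq ?mulr1.
- by move=> q qp; rewrite /fa ffunE (negbTE qp).
Qed.

Lemma XT_comm p a : XX p * T a = T a * XX p.
Proof.
rewrite T_prod; apply: commr_prod => q _; rewrite /fa /GRing.comm.
by case: (a q); rewrite ?mulr1 ?mul1r //; apply: X_comm.
Qed.

Lemma hw_flip a p :
  hweight (flip a p) = if a p then (hweight a).-1 else (hweight a).+1.
Proof.
rewrite /hweight; case ap: (a p).
  rewrite (cardD1 p [pred q | a q]) inE ap add1n /=.
  by apply: eq_card => q; rewrite !inE ffunE; case: eqP => [->|]; rewrite ?ap.
have := cardU1 p [pred q | a q]; rewrite !inE ap /= add1n => <-.
by apply: eq_card => q; rewrite !inE ffunE; case: eqP => [->|]; rewrite ?ap.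
Qed.

End E.

Local Open Scope ring_scope.
Local Close Scope ring_scope.
Local Open Scope ring_scope.


Section R.
Variable C : numClosedFieldType.
Variable n : nat.
Local Notation N := (2 ^ n)%N.
Local Notation XX := (X C n).
Local Notation bv := {ffun 'I_(2 * n) -> bool}.
Local Notation T := (T C n).
Local Notation flip := (@flip n).

Definition cnt (b : bv) k :=
  if hweight b == k.+1 then k.+1
  else if (hweight b).+1 == k then (2 * n - hweight b)%N else 0%N.

Lemma cnt_ok b k : #|[pred p | hweight (flip b p) == k]| = cnt b k.
Proof.
have hp : forall p, b p -> (0 < hweight b)%N.
  by move=> p bp; apply/card_gt0P; exists p.
rewrite (eq_card (B := [pred p | (b p && (hweight b == k.+1)) || (~~ b p && ((hweight b).+1 == k))])); last first.
  move=> p; rewrite !inE hw_flip; case bp: (b p) => //=.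
  by have := hp p bp; rewrite orbF; move=> h; apply/eqP/eqP; lia.
rewrite /cnt; case: eqP => [e|ne].
  have f : ((hweight b).+1 == k) = false by apply/eqP; lia.
  rewrite f -e; apply: eq_card => p; rewrite !inE andbT andbF orbF.
  by [].
case: eqP => [e2|ne2].
  have hC : #|[predC [pred p | b p]]| = (2 * n - hweight b)%N.
    transitivity ((hweight b + #|[predC [pred p | b p]]|) - hweight b)%N; first by rewrite addKn.
    by congr (_ - _)%N; have := cardC [pred p | b p]; rewrite card_ord.
  rewrite -hC.
  by apply: eq_card => p; rewrite !inE andbF andbT.
apply: eq_card0 => p; rewrite !inE.
by rewrite !andbF.
Qed.


Definition E k := \sum_(a : bv | hweight a == k) T a.
Definition Lam : 'M[C]_(N * N) := \sum_(p < 2 * n) XX p.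

Lemma rec k : Lam * E k = E k.+1 *+ k.+1 + (if k is j.+1 then E j *+ (2 * n - j) else 0).
Proof.
rewrite /Lam /E mulr_suml.
under eq_bigr => p _ do rewrite mulr_sumr.
under eq_bigr => p _ do under eq_bigr => a _ do rewrite X_T.
under eq_bigr => p _ do rewrite (reindex_inj (inv_inj (@flipK n p))) /=.
under eq_bigr => p _ do under eq_bigr => a _ do rewrite (@flipK n p).
under eq_bigr => p _ do rewrite big_mkcond.
rewrite exchange_big /=.
under eq_bigr => a _ do rewrite -big_mkcond sumr_const cnt_ok.
rewrite (eq_bigr (fun a => (if hweight a == k.+1 then T a *+ k.+1 else 0) +
   (if (hweight a).+1 == k then T a *+ (2 * n - hweight a) else 0))); last first.
  move=> a _; rewrite /cnt; case: eqP => e; case: eqP => e2;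
    rewrite ?mulr0n ?addr0 ?add0r //; exfalso; lia.
rewrite big_split /= -!big_mkcond sumrMnl; congr (_ + _).
case: k => [|j]; first by rewrite big_pred0.
rewrite -sumrMnl; under eq_bigl => a do rewrite eqSS.
by apply: eq_bigr => a /eqP ->.
Qed.

Lemma Lam_T a : Lam * T a = T a * Lam.
Proof. by rewrite /Lam mulr_suml mulr_sumr; apply: eq_bigr => p _; exact: XT_comm. Qed.

Lemma Lam_E k : Lam * E k = E k * Lam.
Proof. by apply: commr_sum => a _; exact: Lam_T. Qed.

Lemma E0 : E 0 = 1.
Proof.
rewrite /E (big_pred1 [ffun => false]).
  rewrite T_prod big1 // => q _; by rewrite /fa ffunE.
move=> a; rewrite /= /hweight; apply/idP/idP.
  move/eqP/card0_eq => h; apply/eqP/ffunP => q; rewrite ffunE.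
  by have := h q; rewrite !inE => ->.
by move/eqP ->; apply/eqP/eq_card0 => q; rewrite !inE ffunE.
Qed.
End R.

Local Open Scope ring_scope.
Local Close Scope ring_scope.
Local Open Scope ring_scope.


Section F.
Variable C : numClosedFieldType.
Variable n : nat.
Local Notation N := (2 ^ n)%N.
Local Notation E := (E C n).
Local Notation Lam := (Lam C n).

Fixpoint cc (k : nat) : C :=
  match k with
  | 0%N => 1
  | 1%N => 0
  | j.+2 => - ((2 * n - j)%:R / (j.+2)%:R) * cc j
  end.

Lemma cc_real k : cc k \is Num.real.
Proof.
elim/ltn_ind: k => [[|[|j]]] IH //=; rewrite ?rpred1 ?rpred0 //.
by rewrite rpredM ?rpredN ?rpredM ?rpredV ?realn ?IH.
Qed.

Lemma E_W (W : 'M[C]_(N * N)) k : Lam * W = 0 -> E k * W = cc k *: W.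
Proof.
move=> LW.
suff : E k * W = cc k *: W /\ E k.+1 * W = cc k.+1 *: W by case.
elim: k => [|k [IH1 IH2]].
  split; first by rewrite E0 mul1r scale1r.
  have := rec C n 0; rewrite addr0 mulr1n E0 mulr1 => <-.
  by rewrite LW scale0r.
split => //.
have h := congr1 (fun M => M * W) (rec C n k.+1); simpl in h.
rewrite Lam_E -mulrA LW mulr0 mulrDl !mulrnAl IH1 -!scaler_nat scalerA in h.
have h2 : E k.+2 * W = (k.+2%:R)^-1 *: (k.+2%:R *: (E k.+2 * W)).
  by rewrite scalerA mulVf ?pnatr_eq0 // scale1r.
rewrite h2; move/eqP: h; rewrite eq_sym addr_eq0 => /eqP ->.
rewrite scalerN scalerA -scaleNr /=; congr (_ *: _).
ring.
Qed.
End F.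

Local Open Scope ring_scope.
Local Close Scope ring_scope.
Local Open Scope ring_scope.


Theorem proposition2 (C : numClosedFieldType) (n : nat) :
  exists F : 'I_(2 * n).+1 -> C,
    (forall k, F k \is Num.real) /\
    forall rho : 'M[C]_(2 ^ n * 2 ^ n),
      density rho -> range_in_kerLambda rho ->
      forall k : 'I_(2 * n).+1,
        \sum_(a : {ffun 'I_(2 * n) -> bool} | hweight a == k) rho_coef rho a a = F k.
Proof.
exists (fun k => (2 ^+ (2 * n))^-1 * cc C n k); split.
  by move=> k; rewrite rpredM ?rpredV ?rpredX ?cc_real ?realn.
move=> rho [_ _ tr1] hK k.
have LW : Lam C n * rho = 0.
  apply/matrixP => i j; rewrite [RHS]mxE.
  have := hK (delta_mx j 0); rewrite mulmxA -colE => /matrixP/(_ i 0).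
  by rewrite !mxE.
rewrite /rho_coef -mulr_sumr; congr (_ * _).
rewrite -raddf_sum -mulmx_sumr.
change (\tr (rho *m E C n k) = cc C n k).
rewrite mxtrace_mulC.
have := E_W C n rho k LW; rewrite /GRing.mul /= => ->.
by rewrite mxtraceZ tr1 mulr1.
Qed.
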